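(* Let $\mathcal T$ be a closed triangulated surface and let $(\mathcal G,\mathcal D,\{\mathcal D_1,\ldots,\mathcal D_n\})$ be a decomposition of $\mathcal T$. Then the main disc $\mathcal D$ satisfies $T(\mathcal D)\geq \mathrm{mv}(\mathcal T)$ and $V(\mathcal D)\geq \mathrm{mv}(\mathcal T)+1$, where $T(\cdot)$ and $V(\cdot)$ denote the number of triangles and of vertices.
   Context: A triangulated surface is a finite simplicial complex whose underlying space is a connected compact surface; it is closed if the surface has empty boundary. The valence of a vertex is the number of triangles containing it, and $\mathrm{mv}(\mathcal T)$ is the maximal valence of a vertex of $\mathcal T$. A decomposition of a closed triangulated surface $\mathcal T$ is a triple $(\mathcal G,\mathcal D,\{\mathcal D_1,\ldots,\mathcal D_n\})$ with $n\geq 0$ such that: $\mathcal G,\mathcal D,\mathcal D_1,\ldots,\mathcal D_n$ are sub-triangulations (subcomplexes which are triangulated surfaces) of $\mathcal T$; $\mathcal D,\mathcal D_1,\ldots,\mathcal D_n$ are triangulated discs; the interior of $\mathcal D$ contains a vertex of maximal valence in $\mathcal T$; $\mathcal G\cup\mathcal D\cup\mathcal D_1\cup\cdots\cup\mathcal D_n=\mathcal T$; and the intersection of any two of these sub-triangulations is either a triangulated circle or empty. $\mathcal G$ is called the genus-surface and $\mathcal D$ the main disc. *)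

(* Defs.v *)
From mathcomp Require Import all_boot.
Set Implicit Arguments.
Unset Strict Implicit.
Unset Printing Implicit Defensive.

Section SimplicialComplexes.
Variable T : finType.

Definition is_complex (K : {set {set T}}) : Prop :=
  forall s, s \in K -> s != set0 /\
    (forall t : {set T}, t \subset s -> t != set0 -> t \in K).

Definition verts (K : {set {set T}}) := [set s in K | #|s| == 1].
Definition edges (K : {set {set T}}) := [set s in K | #|s| == 2].
Definition triangles (K : {set {set T}}) := [set s in K | #|s| == 3].

Definition nV K := #|verts K|.
Definition nE K := #|edges K|.
Definition nT K := #|triangles K|.

Definition tri_deg (K : {set {set T}}) (e : {set T}) :=
  #|[set t in triangles K | e \subset t]|.

Definition valence (K : {set {set T}}) (v : T) :=
  #|[set t in triangles K | v \in t]|.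

Definition mv (K : {set {set T}}) := \max_(v : T) valence K v.

Definition skel (K : {set {set T}}) : rel T :=
  [rel a b | (a != b) && ([set a; b] \in K)].
Definition connected_cplx (K : {set {set T}}) : Prop :=
  forall a b, [set a] \in K -> [set b] \in K -> connect (skel K) a b.

Definition link_rel (K : {set {set T}}) (v : T) : rel T :=
  [rel a b | [set v; a; b] \in triangles K].

(* Triangulated surface: a finite simplicial complex whose underlying space
   is a connected compact surface (possibly with boundary). *)
Definition pure2 (K : {set {set T}}) : Prop :=
  (forall s, s \in K -> #|s| <= 3) /\
  (forall s, s \in K -> exists t, t \in triangles K /\ s \subset t).

Definition links_connected (K : {set {set T}}) : Prop :=
  forall v a b, a != v -> b != v -> [set v; a] \in K -> [set v; b] \in K ->
    connect (link_rel K v) a b.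

Definition tri_surface (K : {set {set T}}) : Prop :=
  [/\ is_complex K /\ triangles K != set0,
      pure2 K,
      (forall e, e \in edges K -> (1 <= tri_deg K e <= 2)),
      links_connected K
    & connected_cplx K].

Definition closed_surface (K : {set {set T}}) : Prop :=
  tri_surface K /\ (forall e, e \in edges K -> tri_deg K e = 2).

Definition interior_vertex (K : {set {set T}}) (v : T) : Prop :=
  [set v] \in K /\ (forall e, e \in edges K -> v \in e -> tri_deg K e = 2).

(* Triangulated disc: a triangulated surface with nonempty boundary and
   Euler characteristic V - E + T = 1 (by the classification of compact
   surfaces this is exactly a surface homeomorphic to a closed disc). *)
Definition tri_disc (K : {set {set T}}) : Prop :=
  [/\ tri_surface K,
      (exists e, e \in edges K /\ tri_deg K e = 1)
    & nV K + nT K = nE K + 1].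

Definition tri_circle (K : {set {set T}}) : Prop :=
  [/\ is_complex K,
      K != set0,
      (forall s, s \in K -> #|s| <= 2),
      (forall v, [set v] \in K -> #|[set e in edges K | v \in e]| = 2)
    & connected_cplx K].

Definition circle_or_empty (K : {set {set T}}) : Prop :=
  K = set0 \/ tri_circle K.

Definition subtriangulation (S K : {set {set T}}) : Prop :=
  S \subset K /\ tri_surface S.

Definition decomposition (K G D : {set {set T}}) (n : nat)
    (Ds : 'I_n -> {set {set T}}) : Prop :=
  [/\ subtriangulation G K /\ subtriangulation D K /\
        (forall i, subtriangulation (Ds i) K),
      tri_disc D /\ (forall i, tri_disc (Ds i)),
      (exists v, interior_vertex D v /\ valence K v = mv K),
      G :|: D :|: \bigcup_(i < n) Ds i = K
    & [/\ circle_or_empty (G :&: D),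
          (forall i, circle_or_empty (G :&: Ds i)),
          (forall i, circle_or_empty (D :&: Ds i))
        & (forall i j, i != j -> circle_or_empty (Ds i :&: Ds j))]].

End SimplicialComplexes.

(* Main.v *)
Require Import Defs.
From mathcomp Require Import all_boot.
Set Implicit Arguments.
Unset Strict Implicit.

Section Aux.
Variable T : finType.
Implicit Types K D : {set {set T}}.

Lemma cx_sub K (s t : {set T}) : is_complex K -> s \in K -> t \subset s -> t != set0 -> t \in K.
Proof. by move=> cx sK ts t0; have [_ h] := cx _ sK; apply: h. Qed.

Lemma pair_sub (v c : T) (t : {set T}) : v \in t -> c \in t -> [set v; c] \subset t.
Proof. by move=> vt ct; rewrite subUset !sub1set vt ct. Qed.

Lemma pair_ne0 (v c : T) : [set v; c] != set0.
Proof. by apply/set0Pn; exists v; rewrite set21. Qed.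

Lemma step_tri K D (v c : T) (t : {set T}) : D \subset K -> closed_surface K ->
  interior_vertex D v -> c != v ->
  [set v; c] \in D -> t \in triangles K -> [set v; c] \subset t -> t \in D.
Proof.
move=> sDK [_ cK] [_ iD] cv eD tK st.
have eDe : [set v; c] \in edges D by rewrite inE eD cards2 [v == c]eq_sym cv.
have eKe : [set v; c] \in edges K.
  by move: eDe; rewrite !inE => /andP[/(subsetP sDK) -> ->].
have hD := iD _ eDe (set21 _ _). have hK := cK _ eKe.
set A := [set t in triangles D | [set v; c] \subset t].
set B := [set t in triangles K | [set v; c] \subset t].
have sAB : A \subset B.
  apply/subsetP=> x; rewrite !inE => /andP[/andP[xD ->] ->].
  by rewrite (subsetP sDK _ xD).
have eAB : A = B.
  apply/eqP; rewrite eqEcard sAB /=.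
  rewrite /tri_deg -/A -/B in hD hK; by rewrite hD hK.
have : t \in B by rewrite inE tK st.
by rewrite -eAB !inE => /andP[/andP[]].
Qed.

Lemma all_in_D K D v : D \subset K -> closed_surface K -> tri_surface D ->
  interior_vertex D v -> forall t, t \in triangles K -> v \in t -> t \in D.
Proof.
move=> sDK cK sD iv.
have [[[cxK _] _ _ lK _] _] := cK.
have [[cxD _] [_ pD] _ _ _] := sD.
have vD : [set v] \in D by case: iv.
have [t0 [t0D sv]] := pD _ vD.
have t03 : #|t0| = 3 by move: t0D; rewrite inE => /andP[_ /eqP].
have vt0 : v \in t0 by rewrite -sub1set.
have : 0 < #|t0 :\ v| by move: t03; rewrite (cardsD1 v t0) vt0 add1n => -[->].
rewrite card_gt0 => /set0Pn[a0]; rewrite !inE => /andP[a0v a0t].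
have t0D' : t0 \in D by move: t0D; rewrite inE => /andP[].
have ea0 : [set v; a0] \in D by exact: (cx_sub cxD t0D' (pair_sub vt0 a0t) (pair_ne0 _ _)).
have reach : forall c, connect (link_rel K v) a0 c -> [set v; c] \in D /\ c != v.
  move=> c /connectP[p]; elim: p a0 a0v ea0 {a0t} => [|c1 p IH] a a0v ea0 /=.
    by move=> _ ->.
  move=> /andP[lr pth] ec; apply: (IH c1) => //.
    have: #|[set v; a; c1]| == 3 by move: lr; rewrite /link_rel /= inE => /andP[_].
    apply: contraTneq => ->; rewrite (_ : [set v; a; v] = [set v; a]).
      by rewrite cards2; case: (v != a).
    by apply/setP=> x; rewrite !inE; case: (x == v); rewrite ?orbT ?orbF. 
  have tD : [set v; a; c1] \in D.
    apply: (step_tri sDK cK iv a0v ea0 lr).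
    by apply/subsetP=> x; rewrite !inE => /orP[]->; rewrite ?orbT.
  apply: (cx_sub cxD tD); last exact: pair_ne0.
  by apply/subsetP=> x; rewrite !inE => /orP[]->; rewrite ?orbT.
move=> t tK vt.
have t3 : #|t| = 3 by move: tK; rewrite inE => /andP[_ /eqP].
have : 0 < #|t :\ v| by move: t3; rewrite (cardsD1 v t) vt add1n => -[->].
rewrite card_gt0 => /set0Pn[a]; rewrite !inE => /andP[av at_].
have tK' : t \in K by move: tK; rewrite inE => /andP[].
have eaK : [set v; a] \in K by exact: (cx_sub cxK tK' (pair_sub vt at_) (pair_ne0 _ _)).
have [eaD _] := reach a (lK v a0 a a0v av (subsetP sDK _ ea0) eaK).
exact: (step_tri sDK cK iv av eaD tK (pair_sub vt at_)).
Qed.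

Lemma sum_card (X : finType) (A : {set X}) (P : pred X) :
  \sum_(x in A) (P x : nat) = #|[set x in A | P x]|.
Proof.
rewrite -sum1_card [RHS]big_mkcond [LHS]big_mkcond /=; apply: eq_bigr => x _.
by rewrite inE; case: (x \in A); case: (P x).
Qed.

End Aux.

Theorem mainTheorem2 (T : finType) (K G D : {set {set T}}) (n : nat)
    (Ds : 'I_n -> {set {set T}}) :
  closed_surface K -> decomposition K G D Ds ->
  mv K <= nT D /\ (mv K).+1 <= nV D.
Proof.
move=> cK [[_ [[sDK sD] _]] _ [v [iv vmv]] _ _].
have [[[cxK _] _ _ _ _] cK2] := cK.
have inD := all_in_D sDK cK sD iv.
set S := [set t in triangles K | v \in t].
have valS : valence K v = #|S| by [].
rewrite -vmv valS.
split.
  apply: subset_leq_card; apply/subsetP => t; rewrite !inE => /andP[/andP[tK t3] vt].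
  by rewrite t3 inD // inE tK t3.
set L := [set c | (c != v) && ([set c] \in D)].
have vL : v \notin L by rewrite inE eqxx.
have SL : #|S| <= #|L|.
  have e1 : \sum_(t in S) \sum_(c : T) ((c != v) && (c \in t) : nat) = (#|S| * 2)%N.
    rewrite -sum_nat_const; apply: eq_bigr => t; rewrite inE => /andP[tK vt].
    have t3 : #|t| = 3 by move: tK; rewrite inE => /andP[_ /eqP].
    have -> : \sum_c ((c != v) && (c \in t) : nat) = #|t :\ v|.
      have := sum_card [set: T] (fun c => (c != v) && (c \in t)).
      rewrite (eq_bigl (fun c => true)) => [->|c]; last by rewrite inE.
      by apply: eq_card => c; rewrite !inE.
    by move: t3; rewrite (cardsD1 v t) vt add1n => -[->].
  have e2 : \sum_(c : T) \sum_(t in S) ((c != v) && (c \in t) : nat)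
            <= \sum_(c : T) (2 * (c \in L))%N.
    apply: leq_sum => c _.
    rewrite (sum_card S (fun t => (c != v) && (c \in t))).
    case: (boolP [exists t in S, (c != v) && (c \in t)]).
      case/exists_inP => t; rewrite inE => /andP[tK vt] /andP[cv ct].
      have tK' : t \in K by move: tK; rewrite inE => /andP[].
      have ct3 : #|t| = 3 by move: tK; rewrite inE => /andP[_ /eqP].
      have cL : c \in L.
        rewrite inE cv /=; apply: (cx_sub (s := t)) => //.
          by case: sD => -[].
          by apply: inD.
          by rewrite sub1set.
        by apply/set0Pn; exists c; rewrite set11.
      rewrite cL muln1.
      have eK : [set v; c] \in edges K.
        rewrite inE cards2 [v == c]eq_sym cv andbT.
        exact: (cx_sub cxK tK' (pair_sub vt ct) (pair_ne0 _ _)).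
      rewrite -(cK2 _ eK) /tri_deg; apply: subset_leq_card; apply/subsetP => x.
      rewrite !inE => /andP[/andP[xK vx] /andP[_ cx]].
      by rewrite xK pair_sub.
    move=> /exists_inPn h.
    suff -> : [set t in S | (c != v) && (c \in t)] = set0 by rewrite cards0.
    apply/setP => t.
    rewrite in_set in_set0; apply/negbTE; apply/andP => -[tS p].
    by move: (h t tS); rewrite p.
  rewrite exchange_big e1 /= in e2.
  have e3 : \sum_(c : T) (2 * (c \in L))%N = (2 * #|L|)%N.
    rewrite -big_distrr /=; congr (2 * _)%N.
    by rewrite -sum1_card [RHS]big_mkcond; apply: eq_bigr => c _; case: (c \in L).
  rewrite e3 mulnC leq_pmul2l // in e2.
rewrite /nV; apply: (leq_trans _ (subset_leq_card (_ : (fun c => [set c]) @: (v |: L) \subset verts D))).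
  by rewrite card_imset; [rewrite cardsU1 vL add1n ltnS | exact: set1_inj].
apply/subsetP => s /imsetP[c]; rewrite in_setU1 => /orP[/eqP ->|cL] ->.
  by rewrite inE cards1 andbT; case: iv.
by move: cL; rewrite !inE cards1 andbT => /andP[].
Qed.
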